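(* Let $\alpha>0$, $p=\frac{\alpha}{1+\alpha}$, and $q\in(p,1)$. Let $S_t=\sum_{i=1}^t\zeta_i$ where $\zeta_1,\zeta_2,\dots$ are i.i.d. with $\mathbb P(\zeta_i=1)=1-q$ and $\mathbb P(\zeta_i=-1/\alpha)=q$. Then $$\mathbb P\Big(\max_{t\ge1}S_t\le 0\Big)\ \le\ q\min\Big\{\frac{2(q-p)}{p(1-q)},\,1\Big\}.$$ *)

(* Defs.v *)
From HB Require Import structures.
From mathcomp Require Import all_boot all_order all_algebra.
From mathcomp Require Import all_classical all_reals all_analysis.
Set Implicit Arguments. Unset Strict Implicit. Unset Printing Implicit Defensive.
Import Order.TTheory GRing.Theory Num.Theory.
Local Open Scope classical_set_scope.
Local Open Scope ring_scope.

Definition mutually_independent d (T : measurableType d) (R : realType)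
  (P : probability T R) (X : nat -> {RV P >-> R}) : Prop :=
  forall (I : seq nat) (B : nat -> set R),
    uniq I -> (forall i, measurable (B i)) ->
    P (\bigcap_(i in [set j | j \in I]) (X i @^-1` B i))
    = (\prod_(i <- I) P (X i @^-1` B i))%E.

(* Main.v *)
Require Import Defs.
From HB Require Import structures.
From mathcomp Require Import all_boot all_order all_algebra.
From mathcomp Require Import all_classical all_reals all_analysis.
From mathcomp Require Import ring lra.
Import Order.TTheory GRing.Theory Num.Theory.
Import numFieldNormedType.Exports.
Local Open Scope classical_set_scope.
Local Open Scope ring_scope.

Definition kf {R : realType} (p s : R) : R :=
  1 - p * (1 - expR (- s)) - p * (1 - p) * (1 - expR (-s))^+2 / 2 - expR (- (p * s)).

Lemma kf_der (R : realType) (p x : R) : is_derive x 1 (kf p)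
  (p * (expR (-(p*x)) - expR (-x) - (1-p)*(1 - expR (-x))* expR (-x))).
Proof.
have h1 : is_derive x 1 (fun s : R => expR (- s)) (- expR (-x)).
  have := @is_derive1_comp R expR (fun s => -s) x (expR (-x)) (-1) _ _.
  rewrite mulrN1; apply.
have h3 : is_derive x 1 (fun s : R => - (p * s)) (-p).
  have := @is_deriveN R R R (fun s => p * s) x 1 p.
  apply.
  have := @is_deriveZ R R R id p x 1 1.
  rewrite scaler1; apply.
have h2 : is_derive x 1 (fun s : R => expR (- (p * s))) (- p * expR (-(p * x))).
  have := @is_derive1_comp R expR (fun s => -(p * s)) x (expR (-(p*x))) (-p) (is_derive_expR _) h3.
  rewrite mulrC; apply.
pose E := (fun s : R => expR (- s)).
pose E2 := (fun s : R => expR (- (p * s))).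
have -> : kf p = (cst 1 - (p \*: (cst 1 - E)) - ((p*(1-p)/2) \*: (cst 1 - E)^+2) - E2).
  apply/funext => s; rewrite /kf /E /E2 /= !fctE /=.
  rewrite /GRing.scale /=; ring.
apply: is_derive_eq.
rewrite /E /= /GRing.scale /= /cst expr1 !fctE /=.
field; done.
Qed.

Lemma kf_ge0 (R : realType) (p s : R) : 0 < p -> p <= 1 -> 0 <= s -> 0 <= kf p s.
Proof.
move=> p0 p1 s0.
have -> : 0 = kf p 0 by rewrite /kf oppr0 mulr0 oppr0 expR0 subrr mulr0 expr0n /= mulr0 mul0r !subr0 subrr.
apply: (@ger0_derive1_ndecr R (kf p) 0 s) => //.
- move=> x; rewrite in_itv /= => /andP[x0 _].
  rewrite derive1E (@derive_val _ _ _ _ _ _ _ (@kf_der R p x)).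
  have eA : expR (- (p * x)) = expR (- x) * expR ((1 - p) * x).
    by rewrite -expRD; congr expR; ring.
  have hA := expR_ge1Dx ((1 - p) * x).
  have hE := expR_ge1Dx (- x).
  have E0 := expR_gt0 (- x).
  rewrite eA; apply: mulr_ge0; first exact: ltW.
  have : 0 <= expR (- x) * (expR ((1 - p) * x) - 1 - (1 - p) * (1 - expR (- x))).
    apply: mulr_ge0; first exact: ltW.
    have : (1 - p) * (1 - expR (- x)) <= (1 - p) * x.
      apply: ler_wpM2l; lra.
    lra.
  by move=> h; nra.
- have cK : forall x : R, {for x, continuous (kf p)}.
    move=> x; apply/differentiable_continuous/derivable1_diffP; by case: (@kf_der R p x).
  exact: continuous_subspaceT.
Qed.

Lemma exists_theta (R : realType) (alpha q p b : R) :
  0 < alpha -> p = alpha / (1 + alpha) -> p < q -> q < 1 ->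
  b = 2 * (q - p) / (p * (1 - q)) -> b < 1 ->
  exists th : R, 0 <= th /\ 1 < (1 - q) * expR th + q * expR (- (alpha^-1 * th))
    /\ expR (- (th * (1 + alpha^-1))) = 1 - b.
Proof.
move=> a0 hp pq q1 hb b1.
have a1 : 0 < 1 + alpha by lra.
have p0 : 0 < p by rewrite hp divr_gt0.
have p1 : p < 1 by lra.
have e1 : alpha^-1 * p = 1 - p by rewrite hp; field; lra.
have e2 : p * (1 + alpha^-1) = 1 by rewrite hp; field; lra.
have qp : 0 < q - p by lra.
have q1' : 0 < 1 - q by lra.
have b0 : 0 < b by rewrite hb divr_gt0 ?mulr_gt0 //; lra.
pose t := (q - p) / (1 - q).
have t0 : 0 < t by rewrite /t divr_gt0.
have et : t * (1 - q) = q - p by rewrite /t; field; lra.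
have eb : p * (1 - p) * b ^+ 2 / 2 = b * ((1 - p) * t).
  by rewrite hb /t; field; repeat split; lra.
have key : q * b < p * b + p * (1 - p) * b ^+ 2 / 2.
  rewrite eb.
  have : (q - p) < (1 - p) * t by nra.
  nra.
have b1' : 0 < 1 - b by lra.
pose s := - ln (1 - b).
have Es : expR (- s) = 1 - b by rewrite /s opprK lnK // posrE.
have s0 : 0 <= s by rewrite /s oppr_ge0 ln_le0 //; lra.
exists (p * s); split; first exact: mulr_ge0 (ltW p0) s0.
split; last first.
  by rewrite -mulrA (mulrC s) mulrA e2 mul1r.
have K := @kf_ge0 R p s p0 (ltW p1) s0.
rewrite /kf Es (_ : 1 - (1 - b) = b) in K; last by ring.
have eY : expR (p * s) * expR (- (p * s)) = 1 by rewrite -expRD subrr expR0.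
have ea : expR (- (alpha^-1 * (p * s))) = expR (- s) * expR (p * s).
  by rewrite -expRD mulrA e1; congr expR; ring.
rewrite ea Es.
have Y0 := expR_gt0 (p * s).
have y0 := expR_gt0 (- (p * s)).
nra.
Qed.

Fixpoint Fw {R : realType} (q a : R) (n : nat) (v : R) : R :=
  if n is m.+1 then (if v <= 0 then (1 - q) * Fw q a m (v + 1) + q * Fw q a m (v - a) else 0)
  else (if v <= 0 then 1 else 0).

Lemma Fw_bnd (R : realType) (q a : R) : 0 <= q <= 1 -> forall n v, 0 <= Fw q a n v <= 1.
Proof.
move=> /andP[q0 q1]; elim => [|n IH] v /=; first by case: ifP => _; rewrite ?lexx ?ler01.
case: ifP => _; last by rewrite lexx ler01.
have /andP[h1 h2] := IH (v + 1); have /andP[h3 h4] := IH (v - a).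
apply/andP; split; nra.
Qed.

Lemma Fw_pos (R : realType) (q a : R) n v : 0 < v -> Fw q a n v = 0.
Proof. by move=> v0; case: n => [|n] /=; rewrite leNgt v0. Qed.

Lemma Fw_pot (R : realType) (q a th rho : R) : 0 <= q <= 1 -> 0 <= a -> 0 <= th -> 1 <= rho ->
  rho = (1 - q) * expR th + q * expR (- (a * th)) ->
  forall n v, v <= 1 ->
  expR (th * v) <= expR th * (1 - Fw q a n v) + rho^-1 ^+ n * Fw q a n v.
Proof.
move=> /andP[q0 q1] a0 th0 rho1 erho.
have rho0 : 0 < rho by lra.
have E1 : 1 <= expR th by rewrite -expR0 ler_expR.
have r0 : 0 < rho^-1 by rewrite invr_gt0.
have r1 : rho^-1 <= 1 by rewrite invr_le1 // ?unitfE; lra.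
elim => [|n IH] v v1 /=.
  rewrite expr0 mul1r; case: ifPn => v0.
    rewrite (_ : expR th * (1 - 1) + 1 = expR 0); last by rewrite expR0; ring.
    rewrite ler_expR; nra.
  by rewrite ?subr0 ?mulr1 ?mulr0 ?addr0 ler_expR; nra.
case: ifPn => v0; last first.
  by rewrite ?subr0 ?mulr1 ?mulr0 ?addr0 ler_expR; nra.
have bnd := @Fw_bnd R q a ltac:(apply/andP; split => //) n.
set X1 := Fw q a n (v + 1); set X2 := Fw q a n (v - a).
have h1 := IH (v + 1) ltac:(lra).
have h2 := IH (v - a) ltac:(lra).
have /andP[X10 X11] := bnd (v + 1); have /andP[X20 X21] := bnd (v - a).
rewrite -/X1 -/X2 in X10 X11 X20 X21.
have ev : expR (th * v) * rho = (1 - q) * expR (th * (v + 1)) + q * expR (th * (v - a)).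
  have -> : expR (th * (v + 1)) = expR (th * v) * expR th by rewrite -expRD; congr expR; ring.
  have -> : expR (th * (v - a)) = expR (th * v) * expR (- (a * th)) by rewrite -expRD; congr expR; ring.
  rewrite erho; ring.
set Fv := (1 - q) * X1 + q * X2.
have F0 : 0 <= Fv by rewrite /Fv; nra.
have F1 : Fv <= 1 by rewrite /Fv; nra.
set r := rho^-1.
have step : expR (th * v) * rho <= expR th * (1 - Fv) + r ^+ n * Fv.
  rewrite ev /Fv.
  have rn0 : 0 <= r ^+ n by rewrite exprn_ge0 // ltW.
  have q1' : 0 <= 1 - q by lra.
  have := ler_wpM2l q1' h1; have := ler_wpM2l q0 h2.
  move=> A B; apply: le_trans (lerD B A) _.
  rewrite /X1 /X2 /r le_eqVlt; apply/orP; left; apply/eqP; ring.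
have ee : expR (th * v) = (expR (th * v) * rho) * r by rewrite -mulrA mulrV ?mulr1 // unitfE; lra.
rewrite ee.
have E0 : 0 <= expR th * (1 - Fv) by apply: mulr_ge0; lra.
rewrite exprSr.
have : (expR th * (1 - Fv) + r ^+ n * Fv) * r <= expR th * (1 - Fv) + r ^+ n * r * Fv.
  rewrite mulrDl; apply: lerD; first by rewrite -[leRHS]mulr1 ler_wpM2l.
  by rewrite le_eqVlt; apply/orP; left; apply/eqP; ring.
apply: le_trans; apply: ler_wpM2r; first exact: ltW.
exact: step.
Qed.

Lemma Fw_final (R : realType) (q a th rho : R) : 0 <= q <= 1 -> 0 <= a -> 0 <= th -> 1 <= rho ->
  rho = (1 - q) * expR th + q * expR (- (a * th)) ->
  forall n, Fw q a n.+1 0 <= q * ((1 - expR (- (th * (1 + a)))) + rho^-1 ^+ n).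
Proof.
move=> hq a0 th0 rho1 erho n.
have h := @Fw_pot R q a th rho hq a0 th0 rho1 erho n (0 - a) (ltac:(lra) : 0 - a <= 1).
rewrite /= lexx Fw_pos ?ltr01 // mulr0 add0r.
have /andP[X0 X1] := @Fw_bnd R q a hq n (0 - a).
move: h X0 X1; set X := Fw q a n (0 - a) => h X0 X1.
have y0 := expR_gt0 (- th).
have y1 : expR (- th) <= 1 by rewrite -expR0 ler_expR; lra.
have eyE : expR (- th) * expR th = 1 by rewrite -expRD addNr expR0.
have ee : expR (- (th * (1 + a))) = expR (th * (0 - a)) * expR (- th).
  by rewrite -expRD; congr expR; ring.
have rn0 : 0 <= rho^-1 ^+ n by rewrite exprn_ge0 // invr_ge0; lra.
have /andP[q0 q1] := hq.
rewrite ee; apply: ler_wpM2l => //.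
have := ler_wpM2l (ltW y0) h.
set e := expR (th * (0 - a)); set r := rho^-1 ^+ n.
have -> : expR (- th) * (expR th * (1 - X) + r * X) = (1 - X) + expR (- th) * r * X.
  by rewrite mulrDr mulrA eyE mul1r mulrA.
have : expR (- th) * r * X <= r.
  have : expR (- th) * r <= r by rewrite -[leRHS]mul1r ler_wpM2r.
  have : 0 <= expR (- th) * r by rewrite mulr_ge0 // ltW.
  nra.
rewrite (mulrC e); lra.
Qed.

Definition stepv {R : realType} (a : R) (b : bool) : R := if b then 1 else - a.
Definition wgt {R : realType} (q : R) (b : bool) : R := if b then 1 - q else q.
Fixpoint good {R : realType} (a v : R) (s : seq bool) : bool :=
  if s is b :: s' then (v <= 0) && good a (v + stepv a b) s' else (v <= 0).
Fixpoint all_seqs (n : nat) : seq (seq bool) :=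
  if n is m.+1 then map (cons true) (all_seqs m) ++ map (cons false) (all_seqs m)
  else [:: [::]].

Lemma sum_good (R : realType) (q a : R) n v :
  \sum_(s <- all_seqs n | good a v s) \prod_(b <- s) wgt q b = Fw q a n v.
Proof.
elim: n v => [|n IH] v /=.
  by rewrite big_cons big_nil /=; case: ifP; rewrite ?big_nil ?addr0.
rewrite big_cat !big_map /=.
case: ifPn => hv /=.
  rewrite -(IH (v + 1)) -(IH (v - a)) !big_distrr /=.
  by congr (_ + _); apply: eq_bigr => s _; rewrite big_cons.
by rewrite !big_pred0 ?addr0.
Qed.

Lemma mem_all_seqs (s : seq bool) : s \in all_seqs (size s).
Proof.
elim: s => [|b s IH] //=.
by rewrite mem_cat; case: b; rewrite ?(map_f (cons true) IH) ?(map_f (cons false) IH) ?orbT.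
Qed.

Lemma good_of_sums (R : realType) (a : R) (s : seq bool) v :
  (forall t, (t <= size s)%N -> v + \sum_(i < t) stepv a (nth false s i) <= 0) -> good a v s.
Proof.
elim: s v => [|b s IH] v H /=.
  by have := H 0%N (leqnn _); rewrite big_ord0 addr0.
apply/andP; split.
  by have := H 0%N (leq0n _); rewrite big_ord0 addr0.
apply: IH => t ht.
have := H t.+1 ht; rewrite big_ord_recl /= addrA.
congr (_ <= _); congr (_ + _); apply: eq_bigr => i _ //.
Qed.

Lemma size_all_seqs n s : s \in all_seqs n -> size s = n.
Proof.
elim: n s => [|n IH] s /=; first by rewrite inE => /eqP ->.
by rewrite mem_cat => /orP[] /mapP[s' /IH <- ->].
Qed.

Lemma in_bigsetU (T : Type) (I : eqType) (r : seq I) (F : I -> set T) (x : T) (i : I) :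
  i \in r -> F i x -> (\big[setU/set0]_(j <- r) F j) x.
Proof.
elim: r => [|j r IH] //; rewrite inE big_cons => /orP[/eqP <- Fx|ir Fx].
  by left.
by right; apply: IH.
Qed.

Lemma meas_bigU_le d (T : measurableType d) (R : realType) (mu : {measure set T -> \bar R})
  (I : Type) (r : seq I) (F : I -> set T) :
  (forall i, measurable (F i)) ->
  (mu (\big[setU/set0]_(i <- r) F i) <= \sum_(i <- r) mu (F i))%E.
Proof.
move=> mF; elim: r => [|i r IH]; first by rewrite !big_nil measure0.
rewrite !big_cons; apply: le_trans (measureU2 _ _ _) _ => //.
  by apply: bigsetU_measurable => j _.
exact: leeD.
Qed.

Lemma main_bound d (T : measurableType d) (R : realType) (P : probability T R) (a q : R)
  (zeta : nat -> {RV P >-> R}) :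
  0 < a ->
  @mutually_independent _ _ _ P zeta ->
  (forall i, P (zeta i @^-1` [set 1]) = (1 - q)%:E) ->
  (forall i, P (zeta i @^-1` [set - a]) = q%:E) ->
  forall m, (P [set x | forall t : nat, (1 <= t)%N -> (\sum_(i < t) zeta i x <= 0)%R]
   <= (Fw q a m 0)%:E)%E.
Proof.
move=> a0 ind h1 hd m.
set A := [set x | _].
have mz i (y : R) : measurable (zeta i @^-1` [set y]).
  exact: measurable_funPTI.
have mA : measurable A.
  have -> : A = \bigcap_t [set x | (1 <= t)%N -> (\sum_(i < t) zeta i x <= 0)%R].
    apply/seteqP; split => x /= H; first by move=> t _; exact: H.
    by move=> t; exact: (H t I).
  apply: bigcapT_measurable => t.
  case: t => [|t].
    have -> : [set x | (1 <= 0)%N -> (\sum_(i < 0) zeta i x <= 0)%R] = setT.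
      by apply/seteqP; split => x.
    exact: measurableT.
  have mf : measurable_fun setT (fun x => \sum_(i < t.+1) zeta i x).
    by apply: measurable_sum => i.
  have -> : [set x | (1 <= t.+1)%N -> (\sum_(i < t.+1) zeta i x <= 0)%R] =
     setT `&` (fun x => \sum_(i < t.+1) zeta i x) @^-1` `]-oo, 0]%classic.
    apply/seteqP; split => x /=.
      by move=> H; split => //; rewrite in_itv /=; apply: H.
    by move=> [_]; rewrite in_itv /=.
  apply: mf => //; exact: measurable_itv.
set L := [seq s <- all_seqs m | good a 0 s].
pose C (s : seq bool) := \bigcap_(i in [set j | j \in iota 0 m])
   (zeta i @^-1` [set stepv a (nth false s i)]).
pose Bad i := ~` (zeta i @^-1` [set 1] `|` zeta i @^-1` [set - a]).
have mC s : measurable (C s).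
  apply: bigcap_measurableType => i _; exact: mz.
have mBad i : measurable (Bad i).
  by apply: measurableC; apply: measurableU; exact: mz.
have PBad i : P (Bad i) = 0%E.
  rewrite probability_setC; last by apply: measurableU; exact: mz.
  rewrite measureU ?mz ?h1 ?hd //; last first.
    apply/seteqP; split => x //= [-> ]; lra.
  rewrite [X in (1 - X)%E](_ : _ = ((1 - q) + q)%:E); last by rewrite EFinD -(h1 i) -(hd i).
  by rewrite subrK subee.
have PC s : s \in L -> P (C s) = (\prod_(b <- s) wgt q b)%:E.
  rewrite mem_filter => /andP[_ /size_all_seqs sm].
  rewrite /C ind; [|exact: iota_uniq|by move=> i; exact: measurable_set1].
  rewrite (big_nth false) /index_iota subn0 sm -prodEFin.
  apply: eq_bigr => i _; case: (nth false s i) => /=; [exact: h1 | exact: hd].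
have cover : A `<=` (\big[setU/set0]_(s <- L) C s) `|` (\big[setU/set0]_(i <- iota 0 m) Bad i).
  move=> x Ax.
  case: (pselect (exists i, (i < m)%N /\ Bad i x)) => [[i [im Bx]] | nob].
    right; apply: (@in_bigsetU _ _ _ _ _ i) => //.
    by rewrite mem_iota add0n.
  left.
  have hz : forall i, (i < m)%N -> zeta i x = 1 \/ zeta i x = - a.
    move=> i im.
    case: (pselect ((zeta i @^-1` [set 1] `|` zeta i @^-1` [set - a]) x)) => [[]|h].
    - by left.
    - by right.
    - by exfalso; apply: nob; exists i.
  set s := [seq zeta i x == 1 | i <- iota 0 m].
  have ss : size s = m by rewrite size_map size_iota.
  have ns : forall i, (i < m)%N -> stepv a (nth false s i) = zeta i x.
    move=> i im; rewrite (nth_map 0%N) ?size_iota // nth_iota // add0n /stepv.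
    by case: (hz i im) => ->; case: eqP => // H; lra.
  apply: (@in_bigsetU _ _ _ _ _ s).
    rewrite mem_filter; apply/andP; split; last by have := mem_all_seqs s; rewrite ss.
    apply: good_of_sums => t; rewrite ss => tm; rewrite add0r.
    case: t tm => [|t] tm; first by rewrite big_ord0.
    rewrite (eq_bigr (fun i : 'I_t.+1 => zeta i x)); first exact: (Ax t.+1 erefl).
    by move=> i _; apply: ns; apply: leq_trans (ltn_ord i) tm.
  move=> i; rewrite /= mem_iota add0n => im.
  by rewrite /preimage /= ns.
have mU1 : measurable (\big[setU/set0]_(s <- L) C s) by apply: bigsetU_measurable.
have mU2 : measurable (\big[setU/set0]_(i <- iota 0 m) Bad i) by apply: bigsetU_measurable.
have hle := @le_measure _ _ _ P _ _ (mem_set mA) (mem_set (measurableU _ _ mU1 mU2)) cover.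
apply: (le_trans hle).
apply: le_trans (measureU2 _ mU1 mU2) _.
have h2 := leeD (@meas_bigU_le _ _ _ P _ L _ mC) (@meas_bigU_le _ _ _ P _ (iota 0 m) _ mBad).
eapply le_trans; first exact: h2.
have -> : (\sum_(i <- iota 0 m) P (Bad i))%E = 0%E.
  by rewrite big1 // => i _; exact (PBad i).
rewrite adde0.
rewrite -(@sum_good R q a m 0) -sumEFin big_filter.
rewrite le_eqVlt; apply/orP; left; apply/eqP.
rewrite [in RHS]big_mkcond [in LHS]big_mkcond /=; apply: eq_big_seq => s sin.
case: ifP => // gs; apply: PC; by rewrite mem_filter gs /=.
Qed.
Lemma geo_small (R : realType) (r e : R) : 0 <= r < 1 -> 0 < e -> exists n, r ^+ n < e.
Proof.
move=> /andP[r0 r1] e0.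
have c : `|r| < 1 by rewrite ger0_norm.
have := cvg_expr c; move/cvgrPdist_lt/(_ e e0).
case=> N _ HN; exists N; have := HN N (leqnn N).
by rewrite /= sub0r normrN ger0_norm ?exprn_ge0.
Qed.

Theorem lemma3 (d : measure_display) (T : measurableType d) (R : realType)
  (P : probability T R) (alpha q : R) (zeta : nat -> {RV P >-> R}) :
  0 < alpha ->
  alpha / (1 + alpha) < q -> q < 1 ->
  @mutually_independent _ _ _ P zeta ->
  (forall i, P (zeta i @^-1` [set 1]) = (1 - q)%:E) ->
  (forall i, P (zeta i @^-1` [set - alpha^-1]) = q%:E) ->
  let p := alpha / (1 + alpha) in
  (P [set x | forall t : nat, (1 <= t)%N -> (\sum_(i < t) zeta i x <= 0)%R]
   <= (q * Num.min (2 * (q - p) / (p * (1 - q))) 1)%:E)%E.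
Proof.
move=> a0 hpq q1 ind h1 hd; cbv zeta; set p := alpha / (1 + alpha) in hpq *.
have ai0 : 0 < alpha^-1 by rewrite invr_gt0.
have key := @main_bound _ _ _ P alpha^-1 q zeta ai0 ind h1 hd.
set A := [set x | _] in key *.
have a1 : 0 < 1 + alpha by lra.
have p0 : 0 < p by rewrite /p divr_gt0.
have hq : 0 <= q <= 1 by apply/andP; split; lra.
have PA0 : (0 <= P A)%E by exact: measure_ge0.
have fA : P A \is a fin_num.
  rewrite ge0_fin_numE //; apply: le_lt_trans (key 0%N) _; exact: ltry.
rewrite -(fineK fA) lee_fin.
have key' m : fine (P A) <= Fw q alpha^-1 m 0.
  by rewrite -lee_fin (fineK fA); exact: key.
have Aq : fine (P A) <= q.
  have := key' 1%N; rewrite /= lexx.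
  rewrite (_ : (0 + 1 <= 0) = false); last by apply/negbTE; rewrite -ltNge; lra.
  rewrite (_ : (0 - alpha^-1 <= 0) = true); last by apply/idP; lra.
  by rewrite mulr0 add0r mulr1.
set b := 2 * (q - p) / (p * (1 - q)).
case: (ltP b 1) => hb; last first.
  by rewrite mulr1.
have [th [th0 [rho1 eth]]] := @exists_theta R alpha q p b a0 erefl hpq q1 erefl hb.
set rho := (1 - q) * expR th + q * expR (- (alpha^-1 * th)) in rho1.
have hf n := @Fw_final R q alpha^-1 th rho hq (ltW ai0) th0 (ltW rho1) erefl n.
rewrite eth (_ : 1 - (1 - b) = b) in hf; last by ring.
apply/ler_addgt0Pr => e e0.
have r01 : 0 <= rho^-1 < 1.
  by apply/andP; split; [rewrite invr_ge0; lra | rewrite invf_lt1 //; lra].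
have q0 : 0 < q by lra.
have [n hn] := @geo_small R _ _ r01 (divr_gt0 e0 q0).
apply: le_trans (key' n.+1) _.
apply: le_trans (hf n) _.
rewrite mulrDr lerD2l.
have : q * (rho^-1 ^+ n) <= q * (e / q) by apply: ler_wpM2l; [lra|exact: ltW].
by rewrite mulrCA mulfV ?mulr1 // gt_eqF.
Qed.
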